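(* Let $n\geq 3$ and let $L^B$ be a blow-up of the Boolean lattice $L\cong\mathbf{2}^n$. Then the independence number of $G^c(L^B)_{SR}$ is $\beta\bigl(G^c(L^B)_{SR}\bigr)=2^{n-1}-1$.
   Context: Blow-up: keep $0,1$ of $L=\mathbf{2}^n$ and replace every $x\in L\setminus\{0,1\}$ by a finite nonempty chain $C_x$, ordered by the chain order within $C_x$ and, for $a\in C_x,b\in C_y$, $x\neq y$, by $a\leq b$ iff $x\leq y$ in $L$; $0$ least, $1$ greatest. $Z^*(M)$ is the set of nonzero $a$ with $a\wedge b=0$ for some $b\neq0$; $G^c(M)$ has vertex set $Z^*(M)$, distinct $a,b$ adjacent iff $a\wedge b\neq 0$. In a connected graph, $u$ is maximally distant from $v$ if $d(v,w)\leq d(u,v)$ for all neighbours $w$ of $u$; mutually maximally distant means each is maximally distant from the other. $G_{SR}$ has as vertices those $u$ mutually maximally distant from some $v$, distinct vertices adjacent iff mutually maximally distant in $G$. $\beta(G)$ is the maximum size of a set of pairwise non-adjacent vertices. *)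

(* Defs.v *)
From mathcomp Require Import all_boot.
Set Implicit Arguments.
Unset Strict Implicit.
Unset Printing Implicit Defensive.

Definition gedge (T : finType) (V : {set T}) (adj : rel T) : rel T :=
  fun a b => [&& a \in V, b \in V, a != b & adj a b].

Fixpoint within (T : finType) (e : rel T) (k : nat) (u v : T) : bool :=
  if k is k'.+1 then (u == v) || [exists w, e u w && within e k' w v]
  else u == v.

(* graph distance: least k with a walk of length <= k; shortest paths have
   length < #|T|.  (Convention: #|T| if unreachable; irrelevant for the
   connected graphs considered.) *)
Definition gdist (T : finType) (e : rel T) (u v : T) : nat :=
  find (fun k => within e k u v) (iota 0 #|T|).

Definition max_distant (T : finType) (e : rel T) (u v : T) : bool :=
  [forall w, e u w ==> (gdist e v w <= gdist e u v)].

Definition mut_max_distant (T : finType) (e : rel T) (u v : T) : bool :=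
  max_distant e u v && max_distant e v u.

Definition SR_vertices (T : finType) (V : {set T}) (e : rel T) : {set T} :=
  [set u in V | [exists v in V, mut_max_distant e u v]].

Definition SR_edge (T : finType) (V : {set T}) (e : rel T) : rel T :=
  gedge (SR_vertices V e) (mut_max_distant e).

Definition indep_num (T : finType) (W : {set T}) (e : rel T) : nat :=
  \max_(S : {set T} | (S \subset W) && [forall a in S, forall b in S, ~~ e a b])
     #|S|.

(* raw carrier: inl false = 0, inl true = 1, inr (x; i) = i-th element of
   the chain C_x (chain C_x has k x elements, ordered by i) *)
Definition blow_raw (n : nat) (k : {set 'I_n} -> nat) : finType :=
  (bool + {x : {set 'I_n} & 'I_(k x)})%type.

Definition blow_valid (n : nat) (k : {set 'I_n} -> nat) (a : blow_raw k) : bool :=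
  match a with
  | inl _ => true
  | inr p => (tag p != set0) && (tag p != setT)
  end.

Definition blow_raw_le (n : nat) (k : {set 'I_n} -> nat) (a b : blow_raw k) : bool :=
  match a, b with
  | inl false, _ => true
  | _, inl true => true
  | inl true, _ => false
  | _, inl false => false
  | inr p, inr q =>
      if tag p == tag q then (tagged p <= tagged q)%N
      else tag p \proper tag q
  end.

(* the blow-up L^B (elements of the form inr (x; i) with x = 0 or 1 of L
   are excluded) *)
Definition blowup (n : nat) (k : {set 'I_n} -> nat) : finType :=
  {a : blow_raw k | blow_valid a}.

Definition blow_le (n : nat) (k : {set 'I_n} -> nat) (a b : blowup k) : bool :=
  blow_raw_le (val a) (val b).

Definition blow0 (n : nat) (k : {set 'I_n} -> nat) : blowup k :=
  @exist _ (@blow_valid n k) (inl false) isT.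

(* a /\ b = 0 in L^B : the only common lower bound of a and b is 0 *)
Definition meet_zero (n : nat) (k : {set 'I_n} -> nat) (a b : blowup k) : bool :=
  [forall c, (blow_le c a && blow_le c b) ==> (c == blow0 k)].

Definition zdiv_set (n : nat) (k : {set 'I_n} -> nat) : {set blowup k} :=
  [set a | (a != blow0 k) && [exists b, (b != blow0 k) && meet_zero a b]].

Definition Gc_edge (n : nat) (k : {set 'I_n} -> nat) : rel (blowup k) :=
  gedge (zdiv_set k) (fun a b => ~~ meet_zero a b).

Arguments blow0 {n} k.
Arguments zdiv_set {n} k.
Arguments Gc_edge {n} k.

(* Main.v *)
Require Import Defs.
From mathcomp Require Import all_boot.
From mathcomp Require Import zify.
Set Implicit Arguments.
Unset Strict Implicit.
Unset Printing Implicit Defensive.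

Lemma arith1 n s : 0 < n -> s + s <= 2 ^ n - 2 -> s <= 2 ^ n.-1 - 1.
Proof. case: n => // m _; rewrite expnS /=; have := expn_gt0 2 m; lia. Qed.

Lemma arith2 n s : 0 < n -> s + s = 2 ^ n - 2 -> 2 ^ n.-1 - 1 <= s.
Proof. case: n => // m _; rewrite expnS /=; have := expn_gt0 2 m; lia. Qed.

Section Blow.
Variables (n : nat) (k : {set 'I_n} -> nat).
Hypothesis hn : 3 <= n.
Hypothesis hk : forall x : {set 'I_n}, x != set0 -> x != setT -> 0 < k x.

Local Notation T := (blowup k).

Definition lab (a : T) : {set 'I_n} :=
  match val a with inl b => if b then setT else set0 | inr p => tag p end.

Definition prop (x : {set 'I_n}) := (x != set0) && (x != setT).

Definition i0 : 'I_n := Ordinal (leq_trans (isT : 0 < 3) hn).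

Lemma setT_neq0 : ([set: 'I_n] == set0) = false.
Proof. by apply/negP => /eqP h; have := in_setT i0; rewrite h inE. Qed.

Lemma propC x : prop (~: x) = prop x.
Proof.
have h1 : (~: x == set0) = (x == setT) by rewrite -setCT (inj_eq (@setC_inj _)).
have h2 : (~: x == setT) = (x == set0) by rewrite -setC0 (inj_eq (@setC_inj _)).
by rewrite /prop h1 h2 andbC.
Qed.

Lemma lab_le a b : blow_le a b -> lab a \subset lab b.
Proof.
case: a => ra va; case: ra va => [[]|[x i]] va; case: b => rb vb; case: rb vb => [[]|[y j]] vb //=; rewrite /blow_le /lab /= ?subxx ?sub0set ?subsetT //.
by case: eqP => [ex _|_]; [rewrite ex subxx | rewrite properEneq => /andP[]].
Qed.

Lemma lab_inl b (v : blow_valid (inl b : blow_raw k)) :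
  lab (exist _ (inl b) v) = if b then setT else set0.
Proof. by []. Qed.
Lemma lab_inr p (v : blow_valid (inr p : blow_raw k)) : lab (exist _ (inr p) v) = tag p.
Proof. by []. Qed.

Lemma t1 p b : (inr p == inl b :> blow_raw k) = false.
Proof. by []. Qed.
Lemma t2 b c : (inl b == inl c :> blow_raw k) = (b == c).
Proof. by []. Qed.

Lemma lab0 a : (lab a == set0) = (a == blow0 k).
Proof.
rewrite -[a == _]val_eqE; case: a => ra va; case: ra va => [[]|[x i]] va.
- by rewrite lab_inl setT_neq0 t2.
- by rewrite lab_inl eqxx t2.
rewrite lab_inr t1 /=.
by move: va; rewrite /blow_valid /= => /andP[/negbTE -> _].
Qed.

Lemma labT a : lab a == setT -> val a = inl true.
Proof.
case: a => ra va; case: ra va => [[]|[x i]] va; rewrite ?lab_inl ?lab_inr.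
- by [].
- by rewrite eq_sym setT_neq0.
by move: va; rewrite /blow_valid /= => /andP[_ /negbTE ->].
Qed.

Lemma lab_prop a : prop (lab a) -> exists p, val a = inr p.
Proof.
case: a => ra va; case: ra va => [[]|p] va; rewrite ?lab_inl ?lab_inr.
- by rewrite /prop eqxx andbF.
- by rewrite /prop eqxx.
by exists p.
Qed.

Definition ord0_of m : option 'I_m := if m is m'.+1 then Some ord0 else None.

Definition bot (x : {set 'I_n}) : T :=
  odflt (blow0 k) (obind (fun i => insub (inr (Tagged (fun y => 'I_(k y)) i) : blow_raw k))
                         (ord0_of (k x))).

Lemma bot_val x : prop x -> exists2 i : 'I_(k x), val i = 0 & val (bot x) = inr (Tagged _ i).
Proof.
move=> px; have kx : 0 < k x by case/andP: px; exact: hk.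
have [i [e1 e2]] : exists i : 'I_(k x), ord0_of (k x) = Some i /\ val i = 0.
  by move: kx; rewrite /ord0_of; case: (k x) => // m _; exists ord0.
exists i => //; rewrite /bot e1 /=.
have pv : blow_valid (inr (Tagged (fun y => 'I_(k y)) i) : blow_raw k) by [].
by rewrite (insubT _ pv).
Qed.

Lemma lab_bot x : prop x -> lab (bot x) = x.
Proof. by move=> px; case: (bot_val px) => i _; rewrite /lab => ->. Qed.

Lemma bot_neq0 x : prop x -> bot x != blow0 k.
Proof. by move=> px; rewrite -lab0 lab_bot //; case/andP: px. Qed.

Lemma bot_le x a : prop x -> x \subset lab a -> blow_le (bot x) a.
Proof.
move=> px; case: (bot_val px) => i i0' e; rewrite /blow_le e.
case: a => ra va; case: ra va => [[]|[y j]] va //=; rewrite /lab /=.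
  by rewrite subset0; case/andP: px => /negbTE ->.
move=> sxy; case: eqP => [_|ne]; first by rewrite i0'.
by rewrite properEneq sxy andbT; apply/eqP.
Qed.

Lemma meet_zeroE a b : meet_zero a b = (lab a :&: lab b == set0).
Proof.
apply/forallP/idP.
  move=> H; apply/negPn/negP => ne.
  have [sT|sT] := boolP (lab a :&: lab b == setT).
    have la : lab a == setT by rewrite eqEsubset subsetT -(eqP sT) subsetIl.
    have lb : lab b == setT by rewrite eqEsubset subsetT -(eqP sT) subsetIr.
    have := H a; rewrite /blow_le (labT la) (labT lb) /= -lab0 (eqP la) setT_neq0.
    by case: (val a) => [[]|].
  have ps : prop (lab a :&: lab b) by rewrite /prop ne sT.
  have := H (bot (lab a :&: lab b)).
  rewrite !bot_le ?subsetIl ?subsetIr //= => /eqP h.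
  by have := bot_neq0 ps; rewrite h eqxx.
move=> H c; apply/implyP => /andP[ca cb]; rewrite -lab0 -subset0 -(eqP H).
by rewrite subsetI !lab_le.
Qed.

Local Notation Z := (zdiv_set k).
Local Notation e := (Gc_edge k).

Lemma inZ a : (a \in Z) = prop (lab a).
Proof.
rewrite inE -lab0; apply/andP/idP.
  case=> a0 /existsP[b /andP[b0]]; rewrite meet_zeroE /prop a0 /= => H.
  apply/negP => /eqP aT; move: H; rewrite aT setTI lab0; exact/negP.
move=> pa; split; first by case/andP: pa.
apply/existsP; exists (bot (~: lab a)); rewrite bot_neq0 ?propC //=.
by rewrite meet_zeroE lab_bot ?propC // setICr.
Qed.

Lemma eE a b : e a b = [&& prop (lab a), prop (lab b), a != b & lab a :&: lab b != set0].
Proof. by rewrite /Gc_edge /gedge !inZ meet_zeroE. Qed.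

Lemma e_sym a b : e a b = e b a.
Proof. by rewrite !eE setIC eq_sym; case: (prop (lab a)); case: (prop (lab b)). Qed.

Lemma prop2 (i j : 'I_n) : prop [set i; j].
Proof.
apply/andP; split; first by apply/set0Pn; exists i; rewrite !inE eqxx.
apply/negP => /eqP h; have := cards2 i j; rewrite h cardsT card_ord.
by case: (i != j) => h2; move: hn; rewrite h2.
Qed.

Lemma prop1 (i : 'I_n) : prop [set i].
Proof.
have -> : [set i] = [set i; i] by apply/setP => j; rewrite !inE orbb.
exact: prop2.
Qed.


Lemma within0 u v : within e 0 u v = (u == v).
Proof. by []. Qed.

Lemma within1 u v : within e 1 u v = (u == v) || e u v.
Proof.
rewrite /=; congr (_ || _); apply/existsP/idP => [[w /andP[euw /eqP <-]] //| euv].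
by exists v; rewrite euv eqxx.
Qed.

Lemma within2 u w v : e u w -> e w v -> within e 2 u v.
Proof.
move=> euw ewv; rewrite /=; apply/orP; right; apply/existsP; exists w.
rewrite euw /=; apply/orP; right; apply/existsP; exists v; by rewrite ewv eqxx.
Qed.

Lemma within2_edge u v : e u v -> within e 2 u v.
Proof.
move=> euv; rewrite /=; apply/orP; right; apply/existsP; exists v.
by rewrite euv eqxx.
Qed.

Lemma within2_refl u : within e 2 u u.
Proof. by rewrite /= eqxx. Qed.

Definition top : T := exist _ (inl true) isT.

Lemma cardT3 : 3 <= #|T|.
Proof.
have h1 : blow0 k != top by rewrite eq_sym -lab0 /top lab_inl setT_neq0.
have h2 : blow0 k != bot [set i0] by rewrite eq_sym bot_neq0 // prop1.
have h3 : top != bot [set i0].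
  apply/negP => /eqP h; have := lab_bot (prop1 i0); rewrite -h /top lab_inl => h4.
  by have := prop1 i0; rewrite /prop -h4 eqxx andbF.
have u : uniq [:: blow0 k; top; bot [set i0]] by rewrite /= !inE negb_or h1 h2 h3.
by have := max_card (mem [:: blow0 k; top; bot [set i0]]); rewrite (card_uniqP u).
Qed.

Lemma find3 (p : pred nat) s : p 2 -> find p [:: 0, 1, 2 & s] = if p 0 then 0 else if p 1 then 1 else 2.
Proof. by move=> h /=; rewrite h; case: (p 0); case: (p 1). Qed.

Lemma eZl a b : e a b -> a \in Z.
Proof. by rewrite eE inZ => /and4P[]. Qed.
Lemma eZr a b : e a b -> b \in Z.
Proof. by rewrite eE inZ => /and4P[]. Qed.

Lemma common u v : u \in Z -> v \in Z -> u != v -> ~~ e u v -> exists w, e u w && e w v.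
Proof.
rewrite !inZ => pu pv nuv; rewrite eE pu pv nuv /= negbK => dis.
have pu' := pu; have pv' := pv.
case/andP: pu' => /set0Pn[i iu] _; case/andP: pv' => /set0Pn[j jv] _.
have nin x : x \in lab u -> x \in lab v -> False.
  by move=> xu xv; have := in_set0 x; rewrite -(eqP dis) inE xu xv.
exists (bot [set i; j]); rewrite !eE !lab_bot ?prop2 // pu pv /=.
rewrite -andbA; apply/and4P; split.
- apply/negP => /eqP h; apply: (nin j) => //.
  by rewrite h lab_bot ?prop2 // !inE eqxx orbT.
- by apply/set0Pn; exists i; rewrite !inE iu eqxx.
- apply/negP => /eqP h; apply: (nin i) => //.
  by rewrite -h lab_bot ?prop2 // !inE eqxx.
- by apply/set0Pn; exists j; rewrite !inE jv eqxx orbT.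
Qed.

Definition D u v := if u == v then 0 else if e u v then 1 else 2.

Lemma gdistE u v : u \in Z -> v \in Z -> gdist e u v = D u v.
Proof.
move=> uZ vZ; have h2 : within e 2 u v.
  case: (eqVneq u v) => [->|nuv]; first exact: within2_refl.
  case euv: (e u v); first exact: within2_edge.
  by case: (common uZ vZ nuv (negbT euv)) => w /andP[]; apply: within2.
rewrite /gdist; have := cardT3; case: #|T| => [|[|[|N]]] // _.
rewrite (_ : iota 0 N.+3 = [:: 0, 1, 2 & iota 3 N]) //.
rewrite (@find3 (fun m => within e m u v)) // within0 within1 /D.
by case: (u == v).
Qed.

Lemma D_sym u v : D u v = D v u.
Proof. by rewrite /D eq_sym e_sym. Qed.

Lemma max_distE u v : u \in Z -> v \in Z ->
  max_distant e u v = [forall w, e u w ==> (D v w <= D u v)].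
Proof.
move=> uZ vZ; apply: eq_forallb => w; case euw: (e u w) => //=.
by rewrite !gdistE // (eZr euw).
Qed.

Lemma neighbor u : u \in Z -> exists w, e u w.
Proof.
rewrite inZ => pu; have pu' := pu; case/andP: pu' => /set0Pn[i iu] nT.
have : ~~ ([set: 'I_n] \subset lab u) by move: nT; rewrite eqEsubset subsetT.
case/subsetPn => j _ ju.
exists (bot [set i; j]); rewrite eE lab_bot ?prop2 // pu /=.
apply/andP; split.
- by apply/negP => /eqP h; move: ju; rewrite h lab_bot ?prop2 // !inE eqxx orbT.
- by apply/set0Pn; exists i; rewrite !inE iu eqxx.
Qed.

Lemma notmax u v i : u \in Z -> v \in Z -> i \in lab u -> i \notin lab v -> e u v ->
  ~~ [forall w, e u w ==> (D v w <= D u v)].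
Proof.
move=> uZ vZ iu iv euv.
have nuv : u != v by move: euv; rewrite eE => /and4P[].
have ne : lab u :&: lab v != set0 by move: euv; rewrite eE => /and4P[].
have euw : e u (bot [set i]).
  rewrite eE lab_bot ?prop1 // -inZ uZ /=; apply/andP; split.
  - apply/negP => /eqP h; move: ne; rewrite h lab_bot ?prop1 //.
    case/set0Pn => j; rewrite !inE => /andP[/eqP -> ]; by rewrite (negbTE iv).
  - by apply/set0Pn; exists i; rewrite !inE iu eqxx.
apply/negP => /forallP /(_ (bot [set i])); rewrite euw /= /D (negbTE nuv) euv.
have -> : (v == bot [set i]) = false.
  apply/negP => /eqP h; move: iv; by rewrite h lab_bot ?prop1 // inE eqxx.
have -> : e v (bot [set i]) = false.
  apply/negP; rewrite eE => /and4P[_ _ _]; rewrite lab_bot ?prop1 //.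
  case/set0Pn => j; rewrite !inE => /andP[jv /eqP ej]; by move: iv; rewrite -ej jv.
by [].
Qed.

Lemma mmdE u v : u \in Z -> v \in Z ->
  mut_max_distant e u v = (u != v) && ((lab u :&: lab v == set0) || (lab u == lab v)).
Proof.
move=> uZ vZ; rewrite /mut_max_distant !max_distE //.
case: (eqVneq u v) => [<-|nuv] /=.
  case: (neighbor uZ) => w euw; apply/negbTE; rewrite negb_and; apply/orP; left.
  apply/negP => /forallP /(_ w); rewrite euw /D eqxx /=.
  have -> : (u == w) = false by move: euw; rewrite eE => /and4P[_ _ /negbTE].
  by case: (e u w).
case euv: (e u v).
  have ne : lab u :&: lab v != set0 by move: euv; rewrite eE => /and4P[].
  have Duv : D u v = 1 by rewrite /D (negbTE nuv) euv.
  have Dvu : D v u = 1 by rewrite D_sym.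
  rewrite (negbTE ne) /= Duv Dvu.
  case: (eqVneq (lab u) (lab v)) => [eq|neq].
    apply/andP; split; apply/forallP => w; apply/implyP => ew; rewrite /D;
      case: eqP => // nw; rewrite eE.
    + move: ew; rewrite eE => /and4P[_ -> _]; rewrite -eq => ->.
      by rewrite -inZ uZ /=; case: eqP.
    + move: ew; rewrite eE => /and4P[_ -> _]; rewrite eq => ->.
      by rewrite -inZ vZ /=; case: eqP.
  apply/negbTE; rewrite negb_and; move: neq; rewrite eqEsubset negb_and.
  case/orP => /subsetPn [i iu iv].
    by rewrite -Duv (notmax uZ vZ iu iv euv).
  by rewrite -Dvu (notmax vZ uZ iu iv) ?orbT // e_sym.
have dis : lab u :&: lab v == set0.
  by move: euv; rewrite eE -!inZ uZ vZ nuv /= => /negbT; rewrite negbK.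
rewrite dis /= /D (negbTE nuv) euv eq_sym (negbTE nuv) e_sym euv.
by apply/andP; split; apply/forallP => w; apply/implyP => _; case: (v == w); case: (e v w); case: (u == w); case: (e u w).
Qed.


Lemma SRV : SR_vertices Z e = Z.
Proof.
apply/setP => u; rewrite inE; case uZ: (u \in Z) => //=.
have pu : prop (lab u) by rewrite -inZ.
have bZ : bot (~: lab u) \in Z by rewrite inZ lab_bot ?propC.
apply/existsP; exists (bot (~: lab u)); rewrite bZ mmdE // lab_bot ?propC // setICr eqxx /= andbT.
apply/negP => /eqP h; have := lab_bot (x:=~: lab u); rewrite propC pu -h => /(_ isT) h2.
by case/andP: pu => /negP nu _; apply: nu; rewrite -(setICr (lab u)) -h2 setIid.
Qed.

Lemma SR_edgeE a b : SR_edge Z e a b =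
  [&& a \in Z, b \in Z, a != b & mut_max_distant e a b].
Proof. by rewrite /SR_edge /gedge SRV. Qed.

Definition P : {set {set 'I_n}} := [set x | prop x].

Lemma cardP : #|P| = 2 ^ n - 2.
Proof.
have cA : #|{set 'I_n}| = 2 ^ n.
  by rewrite -cardsT -powersetT card_powerset cardsT card_ord.
have -> : P = ~: [set set0; setT].
  by apply/setP => x; rewrite !inE /prop negb_or.
have := cardsC [set (set0 : {set 'I_n}); setT]; rewrite cA cards2 eq_sym setT_neq0 /=.
move=> <-; by rewrite addKn.
Qed.

Lemma bound (S : {set T}) : S \subset Z ->
  [forall a in S, forall b in S, ~~ SR_edge Z e a b] -> #|S| <= 2 ^ n.-1 - 1.
Proof.
move=> sub ind.
have H a b : a \in S -> b \in S -> a != b -> (lab a :&: lab b != set0) && (lab a != lab b).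
  move=> aS bS nab; move: ind => /forallP /(_ a) /implyP /(_ aS) /forallP /(_ b) /implyP /(_ bS).
  by rewrite SR_edgeE mmdE ?(subsetP sub) // nab /= negb_or.
set F := lab @: S.
have cF : #|F| = #|S|.
  rewrite card_in_imset // => a b aS bS eab; case: (eqVneq a b) => // nab.
  by have := H a b aS bS nab; rewrite eab eqxx andbF.
set G := @setC _ @: F.
have cG : #|G| = #|F| by rewrite card_imset //; exact: setC_inj.
have FG : F :&: G = set0.
  apply/setP => x; rewrite inE in_set0; apply/negP => /andP[].
  case/imsetP => a aS ->; case/imsetP => y /imsetP [b bS ->] eab.
  case: (eqVneq a b) => [eqab|nab].
    have pa : prop (lab a) by rewrite -inZ (subsetP sub).
    case/andP: pa => /negP nu _; apply: nu; rewrite -(setICr (lab a)).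
    by move: eab; rewrite -eqab => eab; rewrite -eab setIid.
  by have := H a b aS bS nab; rewrite eab setIC setICr eqxx.
have sP : F :|: G \subset P.
  apply/subsetP => x; rewrite !inE; case/orP.
    by case/imsetP => a aS ->; rewrite -inZ (subsetP sub).
  case/imsetP => y /imsetP [a aS ->] ->; by rewrite propC -inZ (subsetP sub).
have := subset_leq_card sP; rewrite cardsU FG cards0 subn0 cG cF cardP.
by apply: arith1; apply: leq_trans hn.
Qed.

Definition Q : {set {set 'I_n}} := [set x | prop x && (i0 \in x)].

Lemma cardQ : #|Q| + #|Q| = 2 ^ n - 2.
Proof.
have cG : #|@setC _ @: Q| = #|Q| by rewrite card_imset //; exact: setC_inj.
have QG : Q :&: (@setC _ @: Q) = set0.
  apply/setP => x; rewrite inE in_set0; apply/negP => /andP[].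
  rewrite inE => /andP[_ ix] /imsetP [y]; rewrite inE => /andP[_ iy] ex.
  by move: ix; rewrite ex inE iy.
have QP : Q :|: (@setC _ @: Q) = P.
  apply/setP => x; rewrite !inE; apply/orP/idP.
    case; first by case/andP.
    by case/imsetP => y; rewrite inE => /andP[py _] ->; rewrite propC.
  move=> px; case ix: (i0 \in x); first by left; rewrite px.
  right; apply/imsetP; exists (~: x); last by rewrite setCK.
  by rewrite inE propC px inE ix.
by rewrite -cardP -QP cardsU QG cards0 subn0 cG.
Qed.

Lemma main : indep_num (SR_vertices Z e) (SR_edge Z e) = 2 ^ n.-1 - 1.
Proof.
rewrite /indep_num SRV; apply/eqP; rewrite eqn_leq; apply/andP; split.
  by apply/bigmax_leqP => S /andP[sub ind]; exact: bound.
set W := bot @: Q.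
have QP x : x \in Q -> prop x by rewrite inE => /andP[].
have cW : #|W| = #|Q|.
  rewrite card_in_imset // => x y xQ yQ exy.
  by rewrite -(lab_bot (QP x xQ)) exy lab_bot // QP.
have subW : W \subset Z.
  by apply/subsetP => a /imsetP [x xQ ->]; rewrite inZ lab_bot // QP.
have indW : [forall a in W, forall b in W, ~~ SR_edge Z e a b].
  apply/forallP => a; apply/implyP => aW; apply/forallP => b; apply/implyP => bW.
  rewrite SR_edgeE mmdE ?(subsetP subW) //.
  case: (eqVneq a b) => //= nab.
  move: aW bW nab => /imsetP [x xQ ->] /imsetP [y yQ ->] nxy.
  rewrite !lab_bot ?QP // negb_or; apply/andP; split.
    apply/set0Pn; exists i0; rewrite inE.
    by move: xQ yQ; rewrite !inE => /andP[_ ->] /andP[_ ->].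
  by apply/negP => /eqP exy; move: nxy; rewrite exy eqxx.
apply: (@leq_trans #|W|); last by apply: leq_bigmax_cond; rewrite subW indW.
rewrite cW; apply: arith2; last exact: cardQ; exact: leq_trans hn.
Qed.

End Blow.

Theorem lemma3p19 (n : nat) (k : {set 'I_n} -> nat) :
  3 <= n ->
  (forall x : {set 'I_n}, x != set0 -> x != setT -> 0 < k x) ->
  indep_num (SR_vertices (zdiv_set k) (Gc_edge k))
            (SR_edge (zdiv_set k) (Gc_edge k))
  = 2 ^ n.-1 - 1.
Proof. move=> hn hk; exact: (main hn hk). Qed.
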